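(* Let $G=(V,E)$ be a graph and $n\in\mathbb N$. Suppose that for each $i<n$ the set $A_i\subseteq V$ spans an $n$-connected subgraph of $G$, and that there are pairwise distinct points $y_{i,k}$ ($i<n$, $k<n$) and $x_k$ ($k<n$) in $V$ such that $y_{i,k}\in A_i\cap N_G(x_k)$ for all $i<n$, $k<n$. Let $X=\{x_k:k<n\}$. Then $A=\bigcup\{A_i:i<n\}\cup X$ spans an $n$-connected subgraph of $G$.
   Context: A graph is $n$-connected iff the removal of fewer than $n$ vertices leaves it connected. $N_G(v)=\{w\in V:\{v,w\}\in E\}$. *)

(* Defs.v *)
From Stdlib Require Import List Relations Arith.

Definition simple_graph (V : Type) (E : V -> V -> Prop) : Prop :=
  (forall u v, E u v -> E v u) /\ (forall v, ~ E v v).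

Definition nbhd {V : Type} (E : V -> V -> Prop) (v : V) : V -> Prop :=
  fun w => E v w.

(* The subgraph spanned by S is connected: any two vertices of S are joined
   by a (finite) path all of whose vertices lie in S. The empty graph counts
   as connected (vacuously). *)
Definition connected_in {V : Type} (E : V -> V -> Prop) (S : V -> Prop) : Prop :=
  forall u v, S u -> S v ->
    clos_refl_trans V (fun a b => S a /\ S b /\ E a b) u v.

Definition n_connected_in {V : Type} (E : V -> V -> Prop) (n : nat)
  (S : V -> Prop) : Prop :=
  forall F : list V, length F < n ->
    connected_in E (fun v => S v /\ ~ In v F).

(* Main.v *)
Require Import Defs.
From Stdlib Require Import List Relations Arith Lia Classical.

Lemma pig {V : Type} (F : list V) : forall n (P : nat -> V -> Prop),
  (forall k k' w, k < n -> k' < n -> P k w -> P k' w -> k = k') ->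
  (forall k, k < n -> exists w, P k w /\ In w F) -> n <= length F.
Proof.
  induction F as [|a F IH]; intros n P Hd Hw.
  - destruct n; [lia|]. destruct (Hw 0) as [w [_ []]]; lia.
  - destruct (classic (exists k0, k0 < n /\ P k0 a)) as [[k0 [Hk0 Pa]]|Hno].
    + destruct n as [|m]; [lia|].
      set (idx := fun k => if k <? k0 then k else S k).
      assert (Hidx : forall k, k < m -> idx k < S m /\ idx k <> k0).
      { intros k Hk; unfold idx; destruct (Nat.ltb_spec k k0); lia. }
      assert (Hinj : forall k k', idx k = idx k' -> k = k').
      { intros k k'; unfold idx; destruct (Nat.ltb_spec k k0);
        destruct (Nat.ltb_spec k' k0); lia. }
      cut (m <= length F); [simpl; lia|].
      apply (IH m (fun k w => P (idx k) w)).
      * intros k k' w Hk Hk' H1 H2. apply Hinj.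
        apply (Hd _ _ w); try apply Hidx; auto.
      * intros k Hk. destruct (Hw (idx k)) as [w [Pw Iw]]; [apply Hidx; auto|].
        exists w; split; auto. destruct Iw as [<-|Iw]; auto.
        exfalso. apply (proj2 (Hidx k Hk)). apply (Hd _ _ a); auto. apply Hidx; auto.
    + cut (n <= length F); [simpl; lia|]. apply (IH n P); auto.
      intros k Hk. destruct (Hw k Hk) as [w [Pw Iw]]. exists w; split; auto.
      destruct Iw as [<-|Iw]; auto. exfalso; apply Hno; eauto.
Qed.

Lemma pig_ex {V : Type} (F : list V) n (P : nat -> V -> Prop) :
  length F < n ->
  (forall k k' w, k < n -> k' < n -> P k w -> P k' w -> k = k') ->
  exists k, k < n /\ forall w, P k w -> ~ In w F.
Proof.
  intros Hl Hd. apply NNPP; intro Hn.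
  assert (n <= length F); [|lia].
  apply (pig F n P Hd). intros k Hk. apply NNPP; intro H.
  apply Hn. exists k; split; auto. intros w Pw Iw. apply H; eauto.
Qed.

Lemma crt_mono {V : Type} (R R' : V -> V -> Prop) u v :
  (forall a b, R a b -> R' a b) -> clos_refl_trans V R u v -> clos_refl_trans V R' u v.
Proof. intros H C; induction C; eauto using rt_step, rt_refl, rt_trans. Qed.

Theorem mainTheorem4 (V : Type) (E : V -> V -> Prop) (n : nat)
  (A : nat -> V -> Prop) (y : nat -> nat -> V) (x : nat -> V) :
  simple_graph V E ->
  (forall i, i < n -> n_connected_in E n (A i)) ->
  (* the points y_{i,k} and x_k are pairwise distinct *)
  (forall i k i' k', i < n -> k < n -> i' < n -> k' < n ->
     y i k = y i' k' -> i = i' /\ k = k') ->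
  (forall k k', k < n -> k' < n -> x k = x k' -> k = k') ->
  (forall i k k', i < n -> k < n -> k' < n -> y i k <> x k') ->
  (forall i k, i < n -> k < n -> A i (y i k) /\ nbhd E (x k) (y i k)) ->
  n_connected_in E n
    (fun v => (exists i, i < n /\ A i v) \/ (exists k, k < n /\ v = x k)).
Proof.
  intros [Esym _] HA Hy Hx Hyx Hyn F HF.
  set (S := fun v => ((exists i, i < n /\ A i v) \/ (exists k, k < n /\ v = x k)) /\ ~ In v F).
  set (R := fun a b => S a /\ S b /\ E a b).
  change (forall u v, S u -> S v -> clos_refl_trans V R u v).
  assert (Hsym : forall a b, clos_refl_trans V R a b -> clos_refl_trans V R b a).
  { intros a b C; induction C.
    - apply rt_step. destruct H as [? [? ?]]; split; [|split]; auto.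
    - apply rt_refl.
    - eapply rt_trans; eauto. }
  assert (Hin : forall i a b, i < n -> A i a -> ~ In a F -> A i b -> ~ In b F ->
            clos_refl_trans V R a b).
  { intros i a b Hi Ha Fa Hb Fb.
    apply (crt_mono (fun a b => (A i a /\ ~ In a F) /\ (A i b /\ ~ In b F) /\ E a b)).
    - intros p q [[Ap Fp] [[Aq Fq] Epq]]; repeat split; eauto; left; eauto.
    - apply (HA i Hi F HF); auto. }
  assert (Hij : forall i i' a b, i < n -> i' < n -> A i a -> ~ In a F ->
            A i' b -> ~ In b F -> clos_refl_trans V R a b).
  { intros i i' a b Hi Hi' Ha Fa Hb Fb.
    destruct (Nat.eq_dec i i') as [<-|Hne]; [eapply Hin; eauto|].
    destruct (pig_ex F n (fun k w => w = y i k \/ w = x k \/ w = y i' k) HF)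
      as [k [Hk Hnot]].
    { intros k k' w Hk Hk' H1 H2.
      destruct H1 as [ -> | [ -> | -> ] ]; destruct H2 as [E2|[E2|E2]];
        first [ solve [apply Hx; auto]
              | solve [exfalso; eapply Hyx; [| | | exact E2]; eauto]
              | solve [exfalso; eapply Hyx; [| | | symmetry; exact E2]; eauto]
              | solve [symmetry in E2; apply Hy in E2; auto; lia]
              | solve [apply Hy in E2; auto; lia] ]. }
    destruct (Hyn i k Hi Hk) as [A1 E1]. destruct (Hyn i' k Hi' Hk) as [A2 E2].
    assert (S1 : S (y i k)) by (split; [left; exists i; auto| apply Hnot; auto]).
    assert (S2 : S (y i' k)) by (split; [left; exists i'; auto| apply Hnot; auto]).
    assert (S3 : S (x k)) by (split; [right; exists k; auto| apply Hnot; auto]).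
    apply rt_trans with (y i k); [apply (Hin i); auto; apply Hnot; auto|].
    apply rt_trans with (x k). { apply rt_step; split; [|split]; auto. }
    apply rt_trans with (y i' k). { apply rt_step; split; [|split]; auto. }
    apply (Hin i'); auto; apply Hnot; auto. }
  assert (Hreach : forall u, S u -> exists i a, i < n /\ A i a /\ ~ In a F /\
             clos_refl_trans V R u a).
  { intros u [[[i [Hi Ai]]|[k [Hk ->]]] Fu].
    - exists i, u; repeat split; auto. apply rt_refl.
    - destruct (pig_ex F n (fun i w => w = y i k) HF) as [i [Hi Hnot]].
      { intros i i' w Hi Hi' -> E2. apply Hy in E2; auto; lia. }
      destruct (Hyn i k Hi Hk) as [A1 E1].
      exists i, (y i k); repeat split; auto.
      apply rt_step; repeat split; auto; [right; eauto| left; eauto]. }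
  intros u v Su Sv.
  destruct (Hreach u Su) as [i [a [Hi [Aa [Fa Cu]]]]].
  destruct (Hreach v Sv) as [i' [b [Hi' [Ab [Fb Cv]]]]].
  apply rt_trans with a; auto. apply rt_trans with b; auto.
  apply (Hij i i' a b); auto.
Qed.
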